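(* Let $(S,\wedge,\vee)$ be a skew lattice that is both strongly distributive and co-strongly distributive. Then $S$ is a strong distributive solution of the Yang–Baxter equation, and the associated map $r(x,y)=(x\wedge y,x\vee y)$ satisfies $r^3=r$.
   Context: A skew lattice is a set $S$ with two binary operations $\wedge,\vee$, each idempotent and associative, satisfying the absorption laws $x\wedge(x\vee y)=x=x\vee(x\wedge y)$ and $(x\wedge y)\vee y=y=(x\vee y)\wedge y$ for all $x,y\in S$. $S$ is strongly distributive if it satisfies $(x\vee y)\wedge z=(x\wedge z)\vee(y\wedge z)$ and $x\wedge(y\vee z)=(x\wedge y)\vee(x\wedge z)$; it is co-strongly distributive if it satisfies $(x\wedge y)\vee z=(x\vee z)\wedge(y\vee z)$ and $x\vee(y\wedge z)=(x\vee y)\wedge(x\vee z)$. A map $r:X\times X\to X\times X$ is a set-theoretic solution of the Yang–Baxter equation if $(r\times\mathrm{id})\circ(\mathrm{id}\times r)\circ(r\times\mathrm{id})=(\mathrm{id}\times r)\circ(r\times\mathrm{id})\circ(\mathrm{id}\times r)$. A skew lattice $S$ is a strong distributive solution if the map $r(x,y)=(x\wedge y,x\vee y)$ on $S\times S$ is a set-theoretic solution of the Yang–Baxter equation. *)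

(* Defs.v *)
Definition is_skew_lattice {S : Type} (meet join : S -> S -> S) : Prop :=
  (forall x, meet x x = x) /\ (forall x, join x x = x) /\
  (forall x y z, meet x (meet y z) = meet (meet x y) z) /\
  (forall x y z, join x (join y z) = join (join x y) z) /\
  (forall x y, meet x (join x y) = x) /\
  (forall x y, join x (meet x y) = x) /\
  (forall x y, join (meet x y) y = y) /\
  (forall x y, meet (join x y) y = y).

Definition strongly_distributive {S : Type} (meet join : S -> S -> S) : Prop :=
  (forall x y z, meet (join x y) z = join (meet x z) (meet y z)) /\
  (forall x y z, meet x (join y z) = join (meet x y) (meet x z)).

Definition co_strongly_distributive {S : Type} (meet join : S -> S -> S) : Prop :=
  (forall x y z, join (meet x y) z = meet (join x z) (join y z)) /\
  (forall x y z, join x (meet y z) = meet (join x y) (join x z)).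

Definition r12 {X : Type} (r : X * X -> X * X) (t : X * X * X) : X * X * X :=
  let '(a, b, c) := t in let '(a', b') := r (a, b) in (a', b', c).

Definition r23 {X : Type} (r : X * X -> X * X) (t : X * X * X) : X * X * X :=
  let '(a, b, c) := t in let '(b', c') := r (b, c) in (a, b', c').

Definition is_YB_solution {X : Type} (r : X * X -> X * X) : Prop :=
  forall t, r12 r (r23 r (r12 r t)) = r23 r (r12 r (r23 r t)).

Definition skew_map {S : Type} (meet join : S -> S -> S) (p : S * S) : S * S :=
  (meet (fst p) (snd p), join (fst p) (snd p)).

Definition strong_distributive_solution {S : Type} (meet join : S -> S -> S) : Prop :=
  is_YB_solution (skew_map meet join).

(* Main.v *)
Require Import Defs.
Record Ax {S : Type} (m j : S -> S -> S) : Prop := {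
  ax0 : forall x, (m x x) = x;
  ax1 : forall x, (j x x) = x;
  ax2 : forall x y z, (m x (m y z)) = (m (m x y) z);
  ax3 : forall x y z, (j x (j y z)) = (j (j x y) z);
  ax4 : forall x y, (m x (j x y)) = x;
  ax5 : forall x y, (j x (m x y)) = x;
  ax6 : forall x y, (j (m x y) y) = y;
  ax7 : forall x y, (m (j x y) y) = y;
  ax8 : forall x y z, (m (j x y) z) = (j (m x z) (m y z));
  ax9 : forall x y z, (m x (j y z)) = (j (m x y) (m x z));
  ax10 : forall x y z, (j (m x y) z) = (m (j x z) (j y z));
  ax11 : forall x y z, (j x (m y z)) = (m (j x y) (j x z))
}.
Lemma R0 {S} {m j : S -> S -> S} (H : Ax m j) (x : S) : (m x x) = x.
Proof. exact (@ax0 _ m j H x). Qed.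
Lemma R2 {S} {m j : S -> S -> S} (H : Ax m j) (x : S) (y : S) (z : S) : (m x (m y z)) = (m (m x y) z).
Proof. exact (@ax2 _ m j H x y z). Qed.
Lemma R3 {S} {m j : S -> S -> S} (H : Ax m j) (x : S) (y : S) (z : S) : (j x (j y z)) = (j (j x y) z).
Proof. exact (@ax3 _ m j H x y z). Qed.
Lemma R4 {S} {m j : S -> S -> S} (H : Ax m j) (x : S) (y : S) : (m x (j x y)) = x.
Proof. exact (@ax4 _ m j H x y). Qed.
Lemma R5 {S} {m j : S -> S -> S} (H : Ax m j) (x : S) (y : S) : (j x (m x y)) = x.
Proof. exact (@ax5 _ m j H x y). Qed.
Lemma R6 {S} {m j : S -> S -> S} (H : Ax m j) (x : S) (y : S) : (j (m x y) y) = y.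
Proof. exact (@ax6 _ m j H x y). Qed.
Lemma R7 {S} {m j : S -> S -> S} (H : Ax m j) (x : S) (y : S) : (m (j x y) y) = y.
Proof. exact (@ax7 _ m j H x y). Qed.
Lemma R9 {S} {m j : S -> S -> S} (H : Ax m j) (x : S) (y : S) (z : S) : (m x (j y z)) = (j (m x y) (m x z)).
Proof. exact (@ax9 _ m j H x y z). Qed.
Lemma R10 {S} {m j : S -> S -> S} (H : Ax m j) (x : S) (y : S) (z : S) : (j (m x y) z) = (m (j x z) (j y z)).
Proof. exact (@ax10 _ m j H x y z). Qed.
Lemma R12 {S} {m j : S -> S -> S} (H : Ax m j) (x0 : S) : (m x0 x0) = x0.
Proof. exact (R0 H x0). Qed.
Lemma R14 {S} {m j : S -> S -> S} (H : Ax m j) (x0 : S) (x1 : S) : (m x0 (j x0 x1)) = x0.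
Proof. exact (R4 H x0 x1). Qed.
Lemma R15 {S} {m j : S -> S -> S} (H : Ax m j) (x0 : S) (x1 : S) : (j x0 (m x0 x1)) = x0.
Proof. exact (R5 H x0 x1). Qed.
Lemma R16 {S} {m j : S -> S -> S} (H : Ax m j) (x0 : S) (x1 : S) : (j (m x0 x1) x1) = x1.
Proof. exact (R6 H x0 x1). Qed.
Lemma R17 {S} {m j : S -> S -> S} (H : Ax m j) (x0 : S) (x1 : S) : (m (j x0 x1) x1) = x1.
Proof. exact (R7 H x0 x1). Qed.
Lemma R18 {S} {m j : S -> S -> S} (H : Ax m j) (x0 : S) (x1 : S) : (j x0 (j x0 x1)) = (j x0 x1).
Proof. exact (eq_trans (f_equal (fun h => (j h (j x0 x1))) (eq_sym (R14 H x0 x1))) (R16 H x0 (j x0 x1))). Qed.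
Lemma R22 {S} {m j : S -> S -> S} (H : Ax m j) (x0 : S) (x1 : S) (x2 : S) : (m (m x0 x1) x2) = (m x0 (m x1 x2)).
Proof. exact (eq_sym (R2 H x0 x1 x2)). Qed.
Lemma R23 {S} {m j : S -> S -> S} (H : Ax m j) (x0 : S) (x1 : S) (x2 : S) : (j (m x0 (m x1 x2)) x2) = x2.
Proof. exact (eq_trans (f_equal (fun h => (j h x2)) (eq_sym (R22 H x0 x1 x2))) (R16 H (m x0 x1) x2)). Qed.
Lemma R24 {S} {m j : S -> S -> S} (H : Ax m j) (x0 : S) (x1 : S) (x2 : S) : (j (j x0 x1) x2) = (j x0 (j x1 x2)).
Proof. exact (eq_sym (R3 H x0 x1 x2)). Qed.
Lemma R29 {S} {m j : S -> S -> S} (H : Ax m j) (x0 : S) (x1 : S) (x2 : S) : (j (m x0 x1) (j x1 x2)) = (j x1 x2).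
Proof. exact (eq_trans (f_equal (fun h => (j (m x0 h) (j x1 x2))) (eq_sym (R14 H x1 x2))) (R23 H x0 x1 (j x1 x2))). Qed.
Lemma R32 {S} {m j : S -> S -> S} (H : Ax m j) (x0 : S) (x1 : S) (x2 : S) : (j x0 (j (m x0 x1) x2)) = (j x0 x2).
Proof. exact (eq_trans (eq_sym (R24 H x0 (m x0 x1) x2)) (f_equal (fun h => (j h x2)) (R15 H x0 x1))). Qed.
Lemma R37 {S} {m j : S -> S -> S} (H : Ax m j) (x0 : S) (x1 : S) (x2 : S) : (j (m x0 x1) (m x0 x2)) = (m x0 (j x1 x2)).
Proof. exact (eq_sym (R9 H x0 x1 x2)). Qed.
Lemma R38 {S} {m j : S -> S -> S} (H : Ax m j) (x0 : S) (x1 : S) : (m x0 (j x1 x0)) = (j (m x0 x1) x0).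
Proof. exact (eq_trans (eq_sym (R37 H x0 x1 x0)) (f_equal (fun h => (j (m x0 x1) h)) (R12 H x0))). Qed.
Lemma R39 {S} {m j : S -> S -> S} (H : Ax m j) (x0 : S) (x1 : S) (x2 : S) : (m (j x0 x1) (j x2 x1)) = (j (m x0 x2) x1).
Proof. exact (eq_sym (R10 H x0 x2 x1)). Qed.
Lemma R54 {S} {m j : S -> S -> S} (H : Ax m j) (x0 : S) (x1 : S) (x2 : S) : (m x0 (j x1 (j x0 x2))) = (j (m x0 x1) x0).
Proof. exact (eq_trans (eq_sym (R37 H x0 x1 (j x0 x2))) (f_equal (fun h => (j (m x0 x1) h)) (R14 H x0 x2))). Qed.
Lemma R59 {S} {m j : S -> S -> S} (H : Ax m j) (x0 : S) (x1 : S) (x2 : S) : (j (m x0 (m x1 x2)) x1) = (j (m x1 x2) x1).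
Proof. exact (eq_trans (f_equal (fun h => (j h x1)) (eq_sym (R22 H x0 x1 x2))) (eq_trans (eq_sym (R39 H (m x0 x1) x1 x2)) (eq_trans (f_equal (fun h => (m h (j x2 x1))) (R16 H x0 x1)) (R38 H x1 x2)))). Qed.
Lemma R60 {S} {m j : S -> S -> S} (H : Ax m j) (x0 : S) (x1 : S) (x2 : S) : (j x0 (j (m x1 x2) x1)) = (j x0 x1).
Proof. exact (eq_trans (f_equal (fun h => (j x0 h)) (eq_sym (R59 H x0 x1 x2))) (R32 H x0 (m x1 x2) x1)). Qed.
Lemma R61 {S} {m j : S -> S -> S} (H : Ax m j) (x0 : S) (x1 : S) (x2 : S) : (j (m x0 x1) (j x2 (j x1 x2))) = (j x1 x2).
Proof. exact (eq_trans (eq_sym (R24 H (m x0 x1) x2 (j x1 x2))) (eq_trans (f_equal (fun h => (j h (j x1 x2))) (eq_sym (R39 H x0 x2 x1))) (R16 H (j x0 x2) (j x1 x2)))). Qed.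
Lemma R70 {S} {m j : S -> S -> S} (H : Ax m j) (x0 : S) (x1 : S) (x2 : S) : (j x0 (j x1 (j x2 x1))) = (j x0 (j x2 x1)).
Proof. exact (eq_trans (f_equal (fun h => (j x0 (j h (j x2 x1)))) (eq_sym (R17 H x2 x1))) (R60 H x0 (j x2 x1) x1)). Qed.
Lemma R71 {S} {m j : S -> S -> S} (H : Ax m j) (x0 : S) (x1 : S) (x2 : S) : (j (m x0 (m x1 x2)) x0) = (j (m x0 x2) x0).
Proof. exact (eq_trans (eq_sym (R54 H x0 (m x1 x2) (j x2 x0))) (eq_trans (f_equal (fun h => (m x0 h)) (R61 H x1 x2 x0)) (R38 H x0 x2))). Qed.
Lemma R74 {S} {m j : S -> S -> S} (H : Ax m j) (x0 : S) (x1 : S) (x2 : S) : (j (m x0 x1) (j x2 x1)) = (j x1 (j x2 x1)).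
Proof. exact (eq_trans (eq_sym (R70 H (m x0 x1) x1 x2)) (R29 H x0 x1 (j x2 x1))). Qed.
Lemma G3_0 {S} {m j : S -> S -> S} (H : Ax m j) (a b c : S) : (m (m (m a b) (j a b)) (j (m a b) (j a b))) = (m a b).
Proof. exact (eq_trans (R22 H (m a b) (j a b) (j (m a b) (j a b))) (eq_trans (R22 H a b (m (j a b) (j (m a b) (j a b)))) (eq_trans (f_equal (fun h => (m a (m b h))) (R38 H (j a b) (m a b))) (eq_trans (f_equal (fun h => (m a (m b h))) (R71 H (j a b) a b)) (eq_trans (f_equal (fun h => (m a (m b h))) (R74 H (j a b) b a)) (f_equal (fun h => (m a h)) (R14 H b (j a b)))))))). Qed.
Lemma G3_1 {S} {m j : S -> S -> S} (H : Ax m j) (a b c : S) : (j (m (m a b) (j a b)) (j (m a b) (j a b))) = (j a b).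
Proof. exact (eq_trans (R74 H (m a b) (j a b) (m a b)) (eq_trans (R24 H a b (j (m a b) (j a b))) (eq_trans (f_equal (fun h => (j a (j b h))) (R74 H a b a)) (eq_trans (f_equal (fun h => (j a h)) (R18 H b (j a b))) (eq_trans (R70 H a b a) (R18 H a b)))))). Qed.
Lemma Y0 {S} {m j : S -> S -> S} (H : Ax m j) (x : S) : (m x x) = x.
Proof. exact (@ax0 _ m j H x). Qed.
Lemma Y2 {S} {m j : S -> S -> S} (H : Ax m j) (x : S) (y : S) (z : S) : (m x (m y z)) = (m (m x y) z).
Proof. exact (@ax2 _ m j H x y z). Qed.
Lemma Y3 {S} {m j : S -> S -> S} (H : Ax m j) (x : S) (y : S) (z : S) : (j x (j y z)) = (j (j x y) z).
Proof. exact (@ax3 _ m j H x y z). Qed.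
Lemma Y4 {S} {m j : S -> S -> S} (H : Ax m j) (x : S) (y : S) : (m x (j x y)) = x.
Proof. exact (@ax4 _ m j H x y). Qed.
Lemma Y5 {S} {m j : S -> S -> S} (H : Ax m j) (x : S) (y : S) : (j x (m x y)) = x.
Proof. exact (@ax5 _ m j H x y). Qed.
Lemma Y6 {S} {m j : S -> S -> S} (H : Ax m j) (x : S) (y : S) : (j (m x y) y) = y.
Proof. exact (@ax6 _ m j H x y). Qed.
Lemma Y7 {S} {m j : S -> S -> S} (H : Ax m j) (x : S) (y : S) : (m (j x y) y) = y.
Proof. exact (@ax7 _ m j H x y). Qed.
Lemma Y8 {S} {m j : S -> S -> S} (H : Ax m j) (x : S) (y : S) (z : S) : (m (j x y) z) = (j (m x z) (m y z)).
Proof. exact (@ax8 _ m j H x y z). Qed.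
Lemma Y9 {S} {m j : S -> S -> S} (H : Ax m j) (x : S) (y : S) (z : S) : (m x (j y z)) = (j (m x y) (m x z)).
Proof. exact (@ax9 _ m j H x y z). Qed.
Lemma Y10 {S} {m j : S -> S -> S} (H : Ax m j) (x : S) (y : S) (z : S) : (j (m x y) z) = (m (j x z) (j y z)).
Proof. exact (@ax10 _ m j H x y z). Qed.
Lemma Y11 {S} {m j : S -> S -> S} (H : Ax m j) (x : S) (y : S) (z : S) : (j x (m y z)) = (m (j x y) (j x z)).
Proof. exact (@ax11 _ m j H x y z). Qed.
Lemma Y12 {S} {m j : S -> S -> S} (H : Ax m j) (x0 : S) : (m x0 x0) = x0.
Proof. exact (Y0 H x0). Qed.
Lemma Y14 {S} {m j : S -> S -> S} (H : Ax m j) (x0 : S) (x1 : S) : (m x0 (j x0 x1)) = x0.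
Proof. exact (Y4 H x0 x1). Qed.
Lemma Y15 {S} {m j : S -> S -> S} (H : Ax m j) (x0 : S) (x1 : S) : (j x0 (m x0 x1)) = x0.
Proof. exact (Y5 H x0 x1). Qed.
Lemma Y16 {S} {m j : S -> S -> S} (H : Ax m j) (x0 : S) (x1 : S) : (j (m x0 x1) x1) = x1.
Proof. exact (Y6 H x0 x1). Qed.
Lemma Y17 {S} {m j : S -> S -> S} (H : Ax m j) (x0 : S) (x1 : S) : (m (j x0 x1) x1) = x1.
Proof. exact (Y7 H x0 x1). Qed.
Lemma Y20 {S} {m j : S -> S -> S} (H : Ax m j) (x0 : S) (x1 : S) : (m x0 (m x0 x1)) = (m x0 x1).
Proof. exact (eq_trans (f_equal (fun h => (m h (m x0 x1))) (eq_sym (Y15 H x0 x1))) (Y17 H x0 (m x0 x1))). Qed.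
Lemma Y22 {S} {m j : S -> S -> S} (H : Ax m j) (x0 : S) (x1 : S) (x2 : S) : (m (m x0 x1) x2) = (m x0 (m x1 x2)).
Proof. exact (eq_sym (Y2 H x0 x1 x2)). Qed.
Lemma Y23 {S} {m j : S -> S -> S} (H : Ax m j) (x0 : S) (x1 : S) (x2 : S) : (j (m x0 (m x1 x2)) x2) = x2.
Proof. exact (eq_trans (f_equal (fun h => (j h x2)) (eq_sym (Y22 H x0 x1 x2))) (Y16 H (m x0 x1) x2)). Qed.
Lemma Y24 {S} {m j : S -> S -> S} (H : Ax m j) (x0 : S) (x1 : S) (x2 : S) : (j (j x0 x1) x2) = (j x0 (j x1 x2)).
Proof. exact (eq_sym (Y3 H x0 x1 x2)). Qed.
Lemma Y25 {S} {m j : S -> S -> S} (H : Ax m j) (x0 : S) (x1 : S) (x2 : S) : (m (j x0 (j x1 x2)) x2) = x2.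
Proof. exact (eq_trans (f_equal (fun h => (m h x2)) (eq_sym (Y24 H x0 x1 x2))) (Y17 H (j x0 x1) x2)). Qed.
Lemma Y27 {S} {m j : S -> S -> S} (H : Ax m j) (x0 : S) (x1 : S) (x2 : S) : (m x0 (m (j x0 x1) x2)) = (m x0 x2).
Proof. exact (eq_trans (eq_sym (Y22 H x0 (j x0 x1) x2)) (f_equal (fun h => (m h x2)) (Y14 H x0 x1))). Qed.
Lemma Y28 {S} {m j : S -> S -> S} (H : Ax m j) (x0 : S) (x1 : S) (x2 : S) : (m (j x0 x1) (m x1 x2)) = (m x1 x2).
Proof. exact (eq_trans (eq_sym (Y22 H (j x0 x1) x1 x2)) (f_equal (fun h => (m h x2)) (Y17 H x0 x1))). Qed.
Lemma Y29 {S} {m j : S -> S -> S} (H : Ax m j) (x0 : S) (x1 : S) (x2 : S) : (j (m x0 x1) (j x1 x2)) = (j x1 x2).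
Proof. exact (eq_trans (f_equal (fun h => (j (m x0 h) (j x1 x2))) (eq_sym (Y14 H x1 x2))) (Y23 H x0 x1 (j x1 x2))). Qed.
Lemma Y32 {S} {m j : S -> S -> S} (H : Ax m j) (x0 : S) (x1 : S) (x2 : S) : (j x0 (j (m x0 x1) x2)) = (j x0 x2).
Proof. exact (eq_trans (eq_sym (Y24 H x0 (m x0 x1) x2)) (f_equal (fun h => (j h x2)) (Y15 H x0 x1))). Qed.
Lemma Y34 {S} {m j : S -> S -> S} (H : Ax m j) (x0 : S) (x1 : S) (x2 : S) : (j (m x0 x1) (m x2 x1)) = (m (j x0 x2) x1).
Proof. exact (eq_sym (Y8 H x0 x2 x1)). Qed.
Lemma Y35 {S} {m j : S -> S -> S} (H : Ax m j) (x0 : S) (x1 : S) : (m (j x0 x1) x0) = (j x0 (m x1 x0)).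
Proof. exact (eq_trans (eq_sym (Y34 H x0 x0 x1)) (f_equal (fun h => (j h (m x1 x0))) (Y12 H x0))). Qed.
Lemma Y37 {S} {m j : S -> S -> S} (H : Ax m j) (x0 : S) (x1 : S) (x2 : S) : (j (m x0 x1) (m x0 x2)) = (m x0 (j x1 x2)).
Proof. exact (eq_sym (Y9 H x0 x1 x2)). Qed.
Lemma Y38 {S} {m j : S -> S -> S} (H : Ax m j) (x0 : S) (x1 : S) : (m x0 (j x1 x0)) = (j (m x0 x1) x0).
Proof. exact (eq_trans (eq_sym (Y37 H x0 x1 x0)) (f_equal (fun h => (j (m x0 x1) h)) (Y12 H x0))). Qed.
Lemma Y39 {S} {m j : S -> S -> S} (H : Ax m j) (x0 : S) (x1 : S) (x2 : S) : (m (j x0 x1) (j x2 x1)) = (j (m x0 x2) x1).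
Proof. exact (eq_sym (Y10 H x0 x2 x1)). Qed.
Lemma Y40 {S} {m j : S -> S -> S} (H : Ax m j) (x0 : S) (x1 : S) (x2 : S) : (m (j x0 x1) (j x0 x2)) = (j x0 (m x1 x2)).
Proof. exact (eq_sym (Y11 H x0 x1 x2)). Qed.
Lemma Y48 {S} {m j : S -> S -> S} (H : Ax m j) (x0 : S) (x1 : S) (x2 : S) : (m (j x0 (j x1 x2)) x1) = (j x1 (m x2 x1)).
Proof. exact (eq_trans (f_equal (fun h => (m h x1)) (eq_sym (Y24 H x0 x1 x2))) (eq_trans (eq_sym (Y34 H (j x0 x1) x1 x2)) (f_equal (fun h => (j h (m x2 x1))) (Y17 H x0 x1)))). Qed.
Lemma Y49 {S} {m j : S -> S -> S} (H : Ax m j) (x0 : S) (x1 : S) (x2 : S) : (m x0 (j x1 (m x2 x1))) = (m x0 x1).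
Proof. exact (eq_trans (f_equal (fun h => (m x0 h)) (eq_sym (Y48 H x0 x1 x2))) (Y27 H x0 (j x1 x2) x1)). Qed.
Lemma Y50 {S} {m j : S -> S -> S} (H : Ax m j) (x0 : S) (x1 : S) (x2 : S) : (m (j x0 x1) (m x2 (m x1 x2))) = (m x1 x2).
Proof. exact (eq_trans (eq_sym (Y22 H (j x0 x1) x2 (m x1 x2))) (eq_trans (f_equal (fun h => (m h (m x1 x2))) (eq_sym (Y34 H x0 x2 x1))) (Y17 H (m x0 x2) (m x1 x2)))). Qed.
Lemma Y55 {S} {m j : S -> S -> S} (H : Ax m j) (x0 : S) (x1 : S) (x2 : S) : (m x0 (m x1 (m x0 (j x1 x2)))) = (m x0 x1).
Proof. exact (eq_trans (eq_sym (Y22 H x0 x1 (m x0 (j x1 x2)))) (eq_trans (f_equal (fun h => (m (m x0 x1) h)) (eq_sym (Y37 H x0 x1 x2))) (Y14 H (m x0 x1) (m x0 x2)))). Qed.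
Lemma Y59 {S} {m j : S -> S -> S} (H : Ax m j) (x0 : S) (x1 : S) (x2 : S) : (j (m x0 (m x1 x2)) x1) = (j (m x1 x2) x1).
Proof. exact (eq_trans (f_equal (fun h => (j h x1)) (eq_sym (Y22 H x0 x1 x2))) (eq_trans (eq_sym (Y39 H (m x0 x1) x1 x2)) (eq_trans (f_equal (fun h => (m h (j x2 x1))) (Y16 H x0 x1)) (Y38 H x1 x2)))). Qed.
Lemma Y60 {S} {m j : S -> S -> S} (H : Ax m j) (x0 : S) (x1 : S) (x2 : S) : (j x0 (j (m x1 x2) x1)) = (j x0 x1).
Proof. exact (eq_trans (f_equal (fun h => (j x0 h)) (eq_sym (Y59 H x0 x1 x2))) (Y32 H x0 (m x1 x2) x1)). Qed.
Lemma Y64 {S} {m j : S -> S -> S} (H : Ax m j) (x0 : S) (x1 : S) (x2 : S) : (j x0 (j x1 (j x0 (m x1 x2)))) = (j x0 x1).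
Proof. exact (eq_trans (eq_sym (Y24 H x0 x1 (j x0 (m x1 x2)))) (eq_trans (f_equal (fun h => (j (j x0 x1) h)) (eq_sym (Y40 H x0 x1 x2))) (Y15 H (j x0 x1) (j x0 x2)))). Qed.
Lemma Y66 {S} {m j : S -> S -> S} (H : Ax m j) (x0 : S) (x1 : S) (x2 : S) : (m x0 (j x1 (j x2 x1))) = (m x0 (j x1 x2)).
Proof. exact (eq_trans (f_equal (fun h => (m x0 h)) (eq_sym (Y24 H x1 x2 x1))) (eq_trans (f_equal (fun h => (m x0 (j (j x1 x2) h))) (eq_sym (Y14 H x1 x2))) (Y49 H x0 (j x1 x2) x1))). Qed.
Lemma Y67 {S} {m j : S -> S -> S} (H : Ax m j) (x0 : S) (x1 : S) (x2 : S) (x3 : S) : (m x0 (j x1 (m x2 (m x3 x1)))) = (m x0 x1).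
Proof. exact (eq_trans (f_equal (fun h => (m x0 (j x1 h))) (eq_sym (Y22 H x2 x3 x1))) (Y49 H x0 x1 (m x2 x3))). Qed.
Lemma Y69 {S} {m j : S -> S -> S} (H : Ax m j) (x0 : S) (x1 : S) (x2 : S) : (m x0 (m x1 (m x2 x1))) = (m x0 (m x2 x1)).
Proof. exact (eq_trans (eq_sym (Y27 H x0 x2 (m x1 (m x2 x1)))) (f_equal (fun h => (m x0 h)) (Y50 H x0 x2 x1))). Qed.
Lemma Y70 {S} {m j : S -> S -> S} (H : Ax m j) (x0 : S) (x1 : S) (x2 : S) : (j x0 (j x1 (j x2 x1))) = (j x0 (j x2 x1)).
Proof. exact (eq_trans (f_equal (fun h => (j x0 (j h (j x2 x1)))) (eq_sym (Y17 H x2 x1))) (Y60 H x0 (j x2 x1) x1)). Qed.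
Lemma Y78 {S} {m j : S -> S -> S} (H : Ax m j) (x0 : S) (x1 : S) (x2 : S) : (m x0 (m x1 (m x0 (m x1 x2)))) = (m x0 (m x1 x2)).
Proof. exact (eq_trans (f_equal (fun h => (m x0 (m x1 h))) (eq_sym (Y22 H x0 x1 x2))) (eq_trans (eq_sym (Y22 H x0 x1 (m (m x0 x1) x2))) (eq_trans (Y20 H (m x0 x1) x2) (Y22 H x0 x1 x2)))). Qed.
Lemma Y79 {S} {m j : S -> S -> S} (H : Ax m j) (x0 : S) (x1 : S) (x2 : S) : (m x0 (m x1 (j x0 x2))) = (m x0 (m x1 x0)).
Proof. exact (eq_trans (eq_sym (Y78 H x0 x1 (j x0 x2))) (f_equal (fun h => (m x0 h)) (Y55 H x1 x0 x2))). Qed.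
Lemma Y80 {S} {m j : S -> S -> S} (H : Ax m j) (x0 : S) (x1 : S) : (m x0 (j (m x1 x0) x1)) = (m x0 (m x1 x0)).
Proof. exact (eq_trans (f_equal (fun h => (m x0 h)) (eq_sym (Y38 H x1 x0))) (Y79 H x0 x1 x1)). Qed.
Lemma Y94 {S} {m j : S -> S -> S} (H : Ax m j) (x0 : S) (x1 : S) (x2 : S) (x3 : S) : (m (j x0 (m x1 (j x2 x3))) (m x1 x3)) = (m x1 x3).
Proof. exact (eq_trans (f_equal (fun h => (m (j x0 h) (m x1 x3))) (eq_sym (Y37 H x1 x2 x3))) (Y25 H x0 (m x1 x2) (m x1 x3))). Qed.
Lemma Y97 {S} {m j : S -> S -> S} (H : Ax m j) (x0 : S) (x1 : S) (x2 : S) : (m (j x0 (m x1 x2)) x1) = (j (m x0 x1) (m x1 x2)).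
Proof. exact (eq_trans (f_equal (fun h => (m (j x0 (m x1 x2)) h)) (eq_sym (Y15 H x1 x2))) (Y39 H x0 (m x1 x2) x1)). Qed.
Lemma Y104 {S} {m j : S -> S -> S} (H : Ax m j) (x0 : S) (x1 : S) (x2 : S) (x3 : S) : (j (m x0 (j x1 (m x2 x3))) (j x1 x3)) = (j x1 x3).
Proof. exact (eq_trans (f_equal (fun h => (j (m x0 h) (j x1 x3))) (eq_sym (Y40 H x1 x2 x3))) (Y23 H x0 (j x1 x2) (j x1 x3))). Qed.
Lemma Y108 {S} {m j : S -> S -> S} (H : Ax m j) (x0 : S) (x1 : S) (x2 : S) : (m (j x0 (m x1 x2)) x2) = (m (j x0 x1) x2).
Proof. exact (eq_trans (eq_sym (Y49 H (j x0 (m x1 x2)) x2 x1)) (eq_trans (Y39 H x0 (m x1 x2) x2) (Y34 H x0 x2 x1))). Qed.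
Lemma Y111 {S} {m j : S -> S -> S} (H : Ax m j) (x0 : S) (x1 : S) (x2 : S) : (m x0 (m x1 (m x0 x2))) = (m x0 (m x1 x2)).
Proof. exact (eq_trans (f_equal (fun h => (m x0 h)) (eq_sym (Y69 H x1 x2 x0))) (eq_trans (f_equal (fun h => (m x0 h)) (eq_sym (Y22 H x1 x2 (m x0 x2)))) (eq_trans (f_equal (fun h => (m x0 (m (m x1 x2) (m x0 h)))) (eq_sym (Y16 H x1 x2))) (Y55 H x0 (m x1 x2) x2)))). Qed.
Lemma Y115 {S} {m j : S -> S -> S} (H : Ax m j) (x0 : S) (x1 : S) (x2 : S) (x3 : S) : (j x0 (j (m x1 x2) (j x1 x3))) = (j x0 (j x1 x3)).
Proof. exact (eq_trans (f_equal (fun h => (j x0 h)) (eq_sym (Y24 H (m x1 x2) x1 x3))) (eq_trans (eq_sym (Y24 H x0 (j (m x1 x2) x1) x3)) (eq_trans (f_equal (fun h => (j h x3)) (Y60 H x0 x1 x2)) (Y24 H x0 x1 x3)))). Qed.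
Lemma Y118 {S} {m j : S -> S -> S} (H : Ax m j) (x0 : S) (x1 : S) (x2 : S) : (j x0 (j x1 (j x0 x2))) = (j x0 (j x1 x2)).
Proof. exact (eq_trans (f_equal (fun h => (j x0 h)) (eq_sym (Y70 H x1 x2 x0))) (eq_trans (f_equal (fun h => (j x0 h)) (eq_sym (Y24 H x1 x2 (j x0 x2)))) (eq_trans (f_equal (fun h => (j x0 (j (j x1 x2) (j x0 h)))) (eq_sym (Y17 H x1 x2))) (Y64 H x0 (j x1 x2) x2)))). Qed.
Lemma Y121 {S} {m j : S -> S -> S} (H : Ax m j) (x0 : S) (x1 : S) (x2 : S) : (j x0 (m x1 (j x2 x0))) = (j x0 (m x1 x2)).
Proof. exact (eq_trans (eq_sym (Y40 H x0 x1 (j x2 x0))) (eq_trans (Y66 H (j x0 x1) x0 x2) (Y40 H x0 x1 x2))). Qed.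
Lemma Y123 {S} {m j : S -> S -> S} (H : Ax m j) (x0 : S) (x1 : S) (x2 : S) (x3 : S) : (m x0 (j x1 (j x2 (m x3 x1)))) = (m x0 (j x1 x2)).
Proof. exact (eq_trans (f_equal (fun h => (m x0 h)) (eq_sym (Y24 H x1 x2 (m x3 x1)))) (eq_trans (f_equal (fun h => (m x0 (j (j x1 x2) (m x3 h)))) (eq_sym (Y14 H x1 x2))) (Y67 H x0 (j x1 x2) x3 x1))). Qed.
Lemma Y136 {S} {m j : S -> S -> S} (H : Ax m j) (x0 : S) (x1 : S) (x2 : S) : (m (j x0 (m x1 (m x2 x1))) (m x1 x2)) = (m x1 x2).
Proof. exact (eq_trans (f_equal (fun h => (m (j x0 h) (m x1 x2))) (eq_sym (Y80 H x1 x2))) (Y94 H x0 x1 (m x2 x1) x2)). Qed.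
Lemma Y139 {S} {m j : S -> S -> S} (H : Ax m j) (x0 : S) (x1 : S) (x2 : S) : (m (j (m x0 x1) x0) x2) = (m x0 x2).
Proof. exact (eq_trans (eq_sym (Y108 H (m x0 x1) x0 x2)) (eq_trans (f_equal (fun h => (m h x2)) (Y37 H x0 x1 x2)) (eq_trans (Y22 H x0 (j x1 x2) x2) (f_equal (fun h => (m x0 h)) (Y17 H x1 x2))))). Qed.
Lemma Y150 {S} {m j : S -> S -> S} (H : Ax m j) (x0 : S) (x1 : S) (x2 : S) : (j x0 (j x1 (m x2 x1))) = (j x0 (j x1 (m x2 x0))).
Proof. exact (eq_trans (f_equal (fun h => (j x0 h)) (eq_sym (Y35 H x1 x2))) (eq_trans (eq_sym (Y121 H x0 (j x1 x2) x1)) (f_equal (fun h => (j x0 h)) (Y40 H x1 x2 x0)))). Qed.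
Lemma Y156 {S} {m j : S -> S -> S} (H : Ax m j) (x0 : S) (x1 : S) (x2 : S) : (m x0 (j (m x1 x2) (m x2 x0))) = (m x0 x2).
Proof. exact (eq_trans (f_equal (fun h => (m x0 h)) (eq_sym (Y97 H x1 x2 x0))) (eq_trans (eq_sym (Y111 H x0 (j x1 (m x2 x0)) x2)) (eq_trans (eq_sym (Y22 H x0 (j x1 (m x2 x0)) (m x0 x2))) (eq_trans (f_equal (fun h => (m h (m x0 x2))) (eq_sym (Y37 H x0 x1 (m x2 x0)))) (Y136 H (m x0 x1) x0 x2))))). Qed.
Lemma Y158 {S} {m j : S -> S -> S} (H : Ax m j) (x0 : S) (x1 : S) (x2 : S) (x3 : S) : (m (j (m x0 x1) (j x2 x0)) x3) = (m (j x2 x0) x3).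
Proof. exact (eq_trans (f_equal (fun h => (m (j h (j x2 x0)) x3)) (eq_sym (Y28 H x2 x0 x1))) (Y139 H (j x2 x0) (m x0 x1) x3)). Qed.
Lemma Y164 {S} {m j : S -> S -> S} (H : Ax m j) (x0 : S) (x1 : S) (x2 : S) (x3 : S) : (m x0 (j x1 (j x2 (m x3 x2)))) = (m x0 (j x1 x2)).
Proof. exact (eq_trans (f_equal (fun h => (m x0 h)) (Y150 H x1 x2 x3)) (Y123 H x0 x1 x2 x3)). Qed.
Lemma Y168 {S} {m j : S -> S -> S} (H : Ax m j) (x0 : S) (x1 : S) (x2 : S) : (j (m x0 x1) (j (m x2 x1) x0)) = (j (m x2 x1) x0).
Proof. exact (eq_trans (f_equal (fun h => (j h (j (m x2 x1) x0))) (eq_sym (Y156 H x0 x2 x1))) (Y104 H x0 (m x2 x1) x1 x0)). Qed.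
Lemma Y198 {S} {m j : S -> S -> S} (H : Ax m j) (x0 : S) (x1 : S) (x2 : S) (x3 : S) : (j (m x0 x1) (j (m x2 x1) x3)) = (j (m (j x0 x2) x1) x3).
Proof. exact (eq_trans (eq_sym (Y24 H (m x0 x1) (m x2 x1) x3)) (f_equal (fun h => (j h x3)) (Y34 H x0 x1 x2))). Qed.
Lemma Y199 {S} {m j : S -> S -> S} (H : Ax m j) (x0 : S) (x1 : S) (x2 : S) : (j (m (j x0 x1) x2) x0) = (j (m x1 x2) x0).
Proof. exact (eq_trans (eq_sym (Y198 H x0 x2 x1 x0)) (Y168 H x0 x2 x1)). Qed.
Lemma Y201 {S} {m j : S -> S -> S} (H : Ax m j) (x0 : S) (x1 : S) (x2 : S) : (j (m x0 x1) (j x0 x2)) = (j (m x2 x1) (j x0 x2)).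
Proof. exact (eq_trans (eq_sym (Y24 H (m x0 x1) x0 x2)) (eq_trans (f_equal (fun h => (j h x2)) (eq_sym (Y38 H x0 x1))) (eq_trans (eq_sym (Y199 H x2 x0 (j x1 x0))) (eq_trans (f_equal (fun h => (j h x2)) (Y39 H x2 x0 x1)) (Y24 H (m x2 x1) x0 x2))))). Qed.
Lemma Y206 {S} {m j : S -> S -> S} (H : Ax m j) (x0 : S) (x1 : S) (x2 : S) (x3 : S) : (m (j (m x0 x1) (j x0 x2)) x3) = (m (j x0 x2) x3).
Proof. exact (eq_trans (f_equal (fun h => (m h x3)) (Y201 H x0 x1 x2)) (Y158 H x2 x1 x0 x3)). Qed.
Lemma Y207 {S} {m j : S -> S -> S} (H : Ax m j) (x0 : S) (x1 : S) (x2 : S) (x3 : S) : (m x0 (m x1 (m (j x0 x2) x3))) = (m x0 (m x1 x3)).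
Proof. exact (eq_trans (eq_sym (Y22 H x0 x1 (m (j x0 x2) x3))) (eq_trans (f_equal (fun h => (m (m x0 x1) h)) (eq_sym (Y206 H x0 x1 x2 x3))) (eq_trans (Y27 H (m x0 x1) (j x0 x2) x3) (Y22 H x0 x1 x3)))). Qed.
Lemma Y213 {S} {m j : S -> S -> S} (H : Ax m j) (x0 : S) (x1 : S) (x2 : S) (x3 : S) : (j (m x0 x1) (j (m x0 x2) x3)) = (j (m x0 (j x1 x2)) x3).
Proof. exact (eq_trans (eq_sym (Y24 H (m x0 x1) (m x0 x2) x3)) (f_equal (fun h => (j h x3)) (Y37 H x0 x1 x2))). Qed.
Lemma Y221 {S} {m j : S -> S -> S} (H : Ax m j) (x0 : S) (x1 : S) (x2 : S) : (j (m x0 x1) (j x0 (j x1 x2))) = (j x1 (j x0 x2)).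
Proof. exact (eq_trans (f_equal (fun h => (j (m x0 x1) h)) (eq_sym (Y118 H x0 x1 x2))) (eq_trans (f_equal (fun h => (j (m x0 x1) (j x0 h))) (eq_sym (Y24 H x1 x0 x2))) (eq_trans (eq_sym (Y24 H (m x0 x1) x0 (j (j x1 x0) x2))) (eq_trans (f_equal (fun h => (j h (j (j x1 x0) x2))) (eq_sym (Y38 H x0 x1))) (eq_trans (Y29 H x0 (j x1 x0) x2) (Y24 H x1 x0 x2)))))). Qed.
Lemma Y222 {S} {m j : S -> S -> S} (H : Ax m j) (x0 : S) (x1 : S) (x2 : S) (x3 : S) : (j x0 (j x1 (j x2 x3))) = (j x0 (j x2 (j x1 x3))).
Proof. exact (eq_trans (eq_sym (Y115 H x0 x1 x2 (j x2 x3))) (f_equal (fun h => (j x0 h)) (Y221 H x1 x2 x3))). Qed.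
Lemma Y235 {S} {m j : S -> S -> S} (H : Ax m j) (x0 : S) (x1 : S) (x2 : S) (x3 : S) : (m (j x0 x1) (j x2 (j x3 x1))) = (j (m x0 (j x2 x3)) x1).
Proof. exact (eq_trans (f_equal (fun h => (m (j x0 x1) h)) (eq_sym (Y24 H x2 x3 x1))) (Y39 H x0 x1 (j x2 x3))). Qed.
Lemma Y725 {S} {m j : S -> S -> S} (H : Ax m j) (x0 : S) (x1 : S) (x2 : S) (x3 : S) : (j (m x0 (j x1 x2)) (m x3 x2)) = (j (m x0 x1) (m (j x0 x3) x2)).
Proof. exact (eq_trans (eq_sym (Y213 H x0 x1 x2 (m x3 x2))) (f_equal (fun h => (j (m x0 x1) h)) (Y34 H x0 x2 x3))). Qed.
Lemma Y786 {S} {m j : S -> S -> S} (H : Ax m j) (x0 : S) (x1 : S) (x2 : S) (x3 : S) : (m (j x0 (m x1 x2)) (j x3 x2)) = (j (m x0 (j x3 x2)) (m x1 x2)).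
Proof. exact (eq_trans (eq_sym (Y164 H (j x0 (m x1 x2)) x3 x2 x1)) (Y235 H x0 (m x1 x2) x3 x2)). Qed.
Lemma GY_0 {S} {m j : S -> S -> S} (H : Ax m j) (a b c : S) : (m (m a b) (m (j a b) c)) = (m a (m b c)).
Proof. exact (eq_trans (Y22 H a b (m (j a b) c)) (Y207 H a b b c)). Qed.
Lemma GY_1 {S} {m j : S -> S -> S} (H : Ax m j) (a b c : S) : (j (m a b) (m (j a b) c)) = (m (j a (m b c)) (j b c)).
Proof. exact (eq_trans (eq_sym (Y725 H a b c b)) (eq_sym (Y786 H a b c b))). Qed.
Lemma GY_2 {S} {m j : S -> S -> S} (H : Ax m j) (a b c : S) : (j (j a b) c) = (j (j a (m b c)) (j b c)).
Proof. exact (eq_trans (Y24 H a b c) (eq_trans (f_equal (fun h => (j a h)) (eq_sym (Y32 H b c c))) (eq_trans (eq_sym (Y222 H a (m b c) b c)) (eq_sym (Y24 H a (m b c) (j b c)))))). Qed.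

Theorem mainTheorem6 (S : Type) (meet join : S -> S -> S) :
  is_skew_lattice meet join ->
  strongly_distributive meet join ->
  co_strongly_distributive meet join ->
  strong_distributive_solution meet join /\
  (forall p : S * S,
     skew_map meet join (skew_map meet join (skew_map meet join p))
     = skew_map meet join p).
Proof.
  intros [h0 [h1 [h2 [h3 [h4 [h5 [h6 h7]]]]]]] [d0 d1] [c0 c1].
  assert (H : Ax meet join) by (constructor; auto).
  split.
  - intros [[a b] c]. unfold r12, r23, skew_map; simpl.
    rewrite (GY_0 H a b c), (GY_1 H a b c), (GY_2 H a b c). reflexivity.
  - intros [a b]. unfold skew_map; simpl.
    rewrite (G3_0 H a b a), (G3_1 H a b a). reflexivity.
Qed.
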